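(* Let $n \ge k \ge 1$ be integers, let $s \in (0,1)$, $q = 1-s$ and $r = q/s$. Let $S$ be the (finite) set of states defined in the context, and let $P = (p_{xy})_{x,y \in S}$ be the transition matrix $$p_{xy} = r^{\,b(y)}\,\frac{s^k}{1-q^k}\,q^{\,\phi(|y|-|x|)} .$$ Define weights $\omega_x = r^{\,b(x)}$ for $x \in S$ and the probability vector $\nu_x = \omega_x / \sum_{z \in S} \omega_z$. Then $\nu$ is a stationary distribution of $P$, i.e. $\nu_y = \sum_{x \in S} \nu_x p_{xy}$ for every $y \in S$; moreover it is the unique stationary distribution.
   Context: Model: $k$ workers move in one direction around a closed loop of $n$ bins, never passing one another and never occupying the same bin. In each time step each worker moves bin by bin, performing at each bin an independent Bernoulli trial with success probability $s$, until it either has a success (and stops to collect a part) or is blocked by the worker directly ahead, who has stopped (it then ends one bin behind that worker without a success). States record the forward distances between consecutive workers and which workers were blocked. Formal definitions. Let $1^*$ be a formal symbol and set $|1^*| := 1$ and $|m| := m$ for positive integers $m$. The state space $S$ is the set of $k$-tuples $x = (x_1,\dots,x_k)$ with each $x_i \in \{1^*, 1, 2, \dots, n-k+1\}$, such that $\sum_{i=1}^k |x_i| = n$ and at most $k-1$ entries equal $1^*$. ($x_i$ is the distance from worker $i$ forward to worker $i+1$, indices mod $k$; $x_i = 1^*$ means worker $i$ is blocked.) For $x \in S$, $b(x)$ denotes the number of entries equal to $1^*$, and $|x| := (|x_1|,\dots,|x_k|) \in \mathbb{Z}^k$. For $\Delta = (d_1,\dots,d_k) \in \mathbb{Z}^k$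 with $\sum_i d_i = 0$, put $\gamma_j = \sum_{i=1}^j d_i$ for $j=1,\dots,k$, and $\phi(\Delta) = \sum_{j=1}^k \bigl(\gamma_j - \min_{1 \le i \le k} \gamma_i\bigr)$. ($\phi(\Delta)$ is the total number of Bernoulli failures needed to change the spacing by $\Delta$ when at least one worker moves zero bins after the common advance.) The matrix $P$ is the transition matrix of the warehouse process on $S$. *)

(* Defs.v *)
From HB Require Import structures.
From mathcomp Require Import all_boot all_order all_algebra.
Set Implicit Arguments. Unset Strict Implicit. Unset Printing Implicit Defensive.
Import Order.TTheory GRing.Theory Num.Theory.
Local Open Scope ring_scope.

(* An entry of a state: [None] is the formal symbol 1^*, [Some m] is the
   positive integer m (positivity and the bound n-k+1 are imposed in [inS]). *)
Definition entry (n : nat) := option 'I_n.+1.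

Definition eabs (n : nat) (e : entry n) : nat :=
  if e is Some m then nat_of_ord m else 1%N.

(* k-tuples of entries; worker i = index i (0-based) *)
Definition state (n k : nat) := {ffun 'I_k -> entry n}.

Definition bnum (n k : nat) (x : state n k) : nat :=
  #|[pred i : 'I_k | x i == None]|.

Definition inS (n k : nat) (x : state n k) : bool :=
  [&& [forall i : 'I_k, if x i is Some m then (1 <= m <= n - k + 1)%N else true],
      (\sum_(i < k) eabs (x i) == n)%N
    & (bnum x <= k - 1)%N].

Definition absv (n k : nat) (x : state n k) : 'I_k -> int :=
  fun i => (eabs (x i))%:Z.

(* minimum of a list of integers (true minimum for nonempty lists) *)
Definition minlist (l : seq int) : int := foldr Num.min (head 0 l) l.

Definition gamma (k : nat) (d : 'I_k -> int) (j : 'I_k) : int :=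
  \sum_(i < k | (i <= j)%N) d i.

Definition phi (k : nat) (d : 'I_k -> int) : int :=
  \sum_(j < k) (gamma d j - minlist [seq gamma d i | i <- enum 'I_k]).

Definition delta (n k : nat) (x y : state n k) : 'I_k -> int :=
  fun i => absv y i - absv x i.

Definition Ptrans (R : realFieldType) (n k : nat) (s : R) (x y : state n k) : R :=
  let q := 1 - s in let r := q / s in
  r ^+ bnum y * (s ^+ k / (1 - q ^+ k)) * q ^ phi (delta x y).

Definition omega (R : realFieldType) (n k : nat) (s : R) (x : state n k) : R :=
  ((1 - s) / s) ^+ bnum x.

Definition nu (R : realFieldType) (n k : nat) (s : R) (x : state n k) : R :=
  omega s x / \sum_(z : state n k | inS z) omega s z.

(* Main.v *)
Require Import Defs.
From HB Require Import structures.
From mathcomp Require Import all_boot all_order all_algebra.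
From mathcomp Require Import zify ring lra.
Import Order.TTheory GRing.Theory Num.Theory.
Set Implicit Arguments. Unset Strict Implicit. Unset Printing Implicit Defensive.
Local Open Scope ring_scope.

Lemma iterS_val k (j : 'I_k) t : val (iter t (@ordS k) j) = ((j + t) %% k)%N.
Proof.
elim: t => [|t IH] /=; first by rewrite addn0 modn_small.
rewrite IH -addn1 modnDml. by rewrite addn1 addnS.
Qed.

Lemma reach k (j0 j : 'I_k) : exists2 t, (t < k)%N & iter t (@ordS k) j0 = j.
Proof.
have hk : (0 < k)%N by case: j => /= m; lia.
exists ((j + (k - j0)) %% k)%N; first by rewrite ltn_mod.
apply: val_inj; rewrite iterS_val /= modnDmr.
have -> : (j0 + (j + (k - j0)) = j + k)%N by have := ltn_ord j0; lia.
by rewrite modnDr modn_small.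
Qed.

Lemma ord_pred_val k (j : 'I_k) :
  val (ord_pred j) = (if val j == 0%N then k.-1 else (val j).-1)%N.
Proof.
rewrite /=; have := ltn_ord j; case: eqP => [->|h] hj.
  by rewrite add0n modn_small //; lia.
have -> : ((j + k).-1 = (j.-1) + k)%N by lia.
by rewrite modnDr modn_small //; lia.
Qed.

Lemma ordS_val k (j : 'I_k) : (j.+1 < k)%N -> val (ordS j) = j.+1.
Proof. by move=> h /=; rewrite modn_small. Qed.

Lemma minlist_gen (h : int) (l : seq int) :
  foldr Num.min h l <= h /\ (forall z, z \in l -> foldr Num.min h l <= z) /\
  foldr Num.min h l \in h :: l.
Proof.
elim: l => [|a l [IH1 [IH2 IH3]]] /=.
  by split; [|split; [move=> z; rewrite in_nil | rewrite inE]].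
set m := foldr _ _ _ in IH1 IH2 IH3 *.
split; first by rewrite ge_min IH1 orbT.
split.
  move=> z; rewrite in_cons => /orP [/eqP ->|zl]; first by rewrite ge_min lexx.
  by rewrite ge_min IH2 ?orbT.
rewrite /Num.min; case: ifP => _; first by rewrite !inE eqxx orbT.
move: IH3; rewrite !inE => /orP [->|->] //; by rewrite !orbT.
Qed.

Lemma minlist_le (l : seq int) z : z \in l -> minlist l <= z.
Proof. by move=> zl; have [_ [h _]] := minlist_gen (head 0 l) l; apply: h. Qed.

Lemma minlist_in (l : seq int) : l != [::] -> minlist l \in l.
Proof.
case: l => [|a l] // _; have [_ [_ h]] := minlist_gen a (a :: l).
by move: h; rewrite /minlist /= in_cons => /orP [/eqP ->|] //; rewrite in_cons eqxx.
Qed.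

Section Gam.
Variable k : nat.
Implicit Types (d : 'I_k.+1 -> int).

Lemma gamma_nat d (j : 'I_k.+1) : gamma d j = \sum_(i < j.+1) d (inord i).
Proof.
rewrite /gamma (@big_ord_widen _ 0 +%R _ _ (fun i => d (inord i)) (ltn_ord j)).
by apply: eq_big => [i|i _]; rewrite ?ltnS // inord_val.
Qed.

Lemma gamma0 d : gamma d ord0 = d ord0.
Proof.
rewrite gamma_nat big_ord1; congr d; apply: val_inj; by rewrite /= inordK.
Qed.

Lemma gammaS d (j : 'I_k.+1) : (0 < j)%N -> gamma d j = gamma d (ord_pred j) + d j.
Proof.
move=> hj; rewrite !gamma_nat ord_pred_val.
case: j hj => [[|m] hm] //= _.
rewrite big_ord_recr /=; congr (_ + d _); apply: val_inj; rewrite /= inordK //.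
Qed.

Lemma gammaL d : gamma d (ord_pred ord0) = \sum_i d i.
Proof.
rewrite gamma_nat ord_pred_val /=.
by apply: eq_bigr => i _; rewrite inord_val.
Qed.

End Gam.
Section UU.
Variables (n k : nat) (y : state n k.+1).
Hypothesis hy : inS y.

Definition cc (j : 'I_k.+1) : nat := eabs (y j).
Definition UU (x : state n k.+1) (j : 'I_k.+1) : int :=
  gamma (delta x y) j - minlist [seq gamma (delta x y) i | i <- enum 'I_k.+1].
Definition Un (x : state n k.+1) (j : 'I_k.+1) : nat := `|UU x j|%N.

Lemma inS_sum (x : state n k.+1) : inS x -> (\sum_i eabs (x i))%N = n.
Proof. by case/and3P => _ /eqP. Qed.

Lemma inS_pos (x : state n k.+1) j : inS x -> (0 < eabs (x j))%N.
Proof.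
case/and3P => /forallP /(_ j); by case: (x j) => [m|] //= /andP [].
Qed.

Lemma sumz (F : 'I_k.+1 -> nat) : \sum_i (F i)%:Z = (\sum_i F i)%N%:Z.
Proof. by rewrite (big_morph Posz PoszD (erefl _)). Qed.

Lemma sumz_cond (P : pred 'I_k.+1) (F : 'I_k.+1 -> nat) :
  \sum_(i | P i) (F i)%:Z = (\sum_(i | P i) F i)%N%:Z.
Proof. by rewrite (big_morph Posz PoszD (erefl _)). Qed.

Lemma delta_sum x : inS x -> \sum_i delta x y i = 0.
Proof.
move=> hx; rewrite /delta /absv sumrB sumz sumz.
by rewrite (inS_sum hx) (inS_sum hy) subrr.
Qed.

Lemma UU_ge0 x j : 0 <= UU x j.
Proof.
rewrite /UU subr_ge0; apply: minlist_le; apply: map_f; by rewrite mem_enum.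
Qed.

Lemma UnE x j : (Un x j)%:Z = UU x j.
Proof. by rewrite /Un gez0_abs // UU_ge0. Qed.

Lemma UU_zero x : exists j, UU x j = 0.
Proof.
have : minlist [seq gamma (delta x y) i | i <- enum 'I_k.+1] \in
        [seq gamma (delta x y) i | i <- enum 'I_k.+1].
  apply: minlist_in; apply/eqP => /(congr1 size); rewrite size_map size_enum_ord //.
case/mapP => j _ hj; exists j; by rewrite /UU -hj subrr.
Qed.

Lemma Un_zero x : exists j, Un x j = 0%N.
Proof. by have [j hj] := UU_zero x; exists j; rewrite /Un hj. Qed.

Lemma UU_rec x j : inS x -> UU x j = UU x (ord_pred j) + delta x y j.
Proof.
move=> hx; rewrite /UU.
case: (posnP j) => [j0|jp].
  have -> : j = ord0 by apply: val_inj.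
  rewrite gamma0 gammaL delta_sum //; lra.
rewrite (gammaS _ jp); lra.
Qed.

Lemma Un_rec x j : inS x -> (Un x j + eabs (x j) = Un x (ord_pred j) + cc j)%N.
Proof.
move=> hx; have := UU_rec j hx; rewrite /delta /absv /cc -!UnE; lia.
Qed.

Lemma partial_le (F : 'I_k.+1 -> nat) (P : pred 'I_k.+1) :
  (\sum_(i | P i) F i <= \sum_i F i)%N.
Proof.
rewrite [X in (_ <= X)%N](bigID P) /=; exact: leq_addr.
Qed.

Lemma gamma_bound x j : inS x -> - n%:Z <= gamma (delta x y) j <= n%:Z.
Proof.
move=> hx; rewrite /gamma /delta /absv sumrB !sumz_cond.
have h1 := partial_le (fun i => eabs (y i)) (fun i => (i <= j)%N).
have h2 := partial_le (fun i => eabs (x i)) (fun i => (i <= j)%N).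
rewrite (inS_sum hx) in h2; rewrite (inS_sum hy) in h1.
lia.
Qed.

Lemma Un_bound x j : inS x -> (Un x j <= 2 * n)%N.
Proof.
move=> hx.
have : minlist [seq gamma (delta x y) i | i <- enum 'I_k.+1] \in
        [seq gamma (delta x y) i | i <- enum 'I_k.+1].
  apply: minlist_in; apply/eqP => /(congr1 size); rewrite size_map size_enum_ord //.
case/mapP => i _ hi.
have := gamma_bound j hx; have := gamma_bound i hx.
have := UnE x j; rewrite /UU hi; lia.
Qed.

End UU.
Section Rho.
Variables (R : realFieldType) (s : R) (B : nat).

Definition rhon (i : nat) : R := if (i < B)%N then s * (1 - s) ^+ i else (1 - s) ^+ B.
Definition rho (t : 'I_B.+1) : R := rhon t.

Lemma rho_tail m : (m <= B)%N -> \sum_(t : 'I_B.+1 | (m <= t)%N) rho t = (1 - s) ^+ m.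
Proof.
move=> hm.
have -> : \sum_(t : 'I_B.+1 | (m <= t)%N) rho t = \sum_(m <= i < B.+1) rhon i.
  by rewrite big_geq_mkord; apply: eq_bigl => i.
rewrite big_nat_recr //= {2}/rhon ltnn.
rewrite (@telescope_sumr_eq _ _ _ (fun i => - (1 - s) ^+ i)) //.
  rewrite opprK; ring.
move=> i /andP [_ hi]; rewrite /rhon hi exprS; ring.
Qed.

Lemma rho_sum : \sum_(t : 'I_B.+1) rho t = 1.
Proof. by rewrite -(expr0 (1 - s)) -(rho_tail (leq0n B)). Qed.

Lemma rho_sum1 : (0 < B)%N -> \sum_(t : 'I_B.+1 | (0 < t)%N) rho t = 1 - s.
Proof. by move=> hB; rewrite (rho_tail hB) expr1. Qed.

End Rho.
Lemma iter_pred_S k (j : 'I_k) t : iter t (@ord_pred k) (iter t (@ordS k) j) = j.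
Proof.
elim: t j => [|t IH] j //.
by rewrite [iter t.+1 (@ordS k) _]iterSr /= IH ordSK.
Qed.

Lemma reach_pred k (j1 j : 'I_k) : exists t, iter t (@ord_pred k) j1 = j.
Proof. have [t _ <-] := reach j j1; exists t; exact: iter_pred_S. Qed.

Section Fib.
Variables (n k : nat) (y : state n k.+1) (B : nat).
Hypothesis hy : inS y.

Definition LL (x : state n k.+1) j := (Un y x (ord_pred j) + cc y j - 1)%N.

Definition fib (x : state n k.+1) (g : {ffun 'I_k.+1 -> 'I_B.+1}) : bool :=
  [forall j, if x j is None then (LL x j < g j)%N else (g j == Un y x j :> nat)].

Lemma cc_pos j : (0 < cc y j)%N.
Proof. exact: inS_pos hy. Qed.

Lemma fib_min x g j : inS x -> fib x g -> Un y x j = minn (g j) (LL x j).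
Proof.
move=> hx /forallP /(_ j); have := Un_rec hy j hx; have := cc_pos j.
have := inS_pos j hx; rewrite /LL.
case: (x j) => [m|] /=.
  move=> h1 h2 h3 /eqP h4; rewrite -h4; lia.
move=> _ h2 h3 h4; lia.
Qed.

Lemma fib_star x g j : inS x -> fib x g -> (x j == None) = (LL x j < g j)%N.
Proof.
move=> hx /forallP /(_ j); have := Un_rec hy j hx; have := cc_pos j.
have := inS_pos j hx; rewrite /LL.
case: (x j) => [m|] /=.
  move=> h1 h2 h3 /eqP h4; apply/esym/negbTE; rewrite -leqNgt; lia.
by [].
Qed.

Lemma fib_unique (g : {ffun 'I_k.+1 -> 'I_B.+1}) j0 (x x' : state n k.+1) : (g j0 : nat) = 0%N ->
  inS x -> fib x g -> inS x' -> fib x' g -> x = x'.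
Proof.
move=> g0 hx fx hx' fx'.
have hU : forall t, Un y x (iter t (@ordS _) j0) = Un y x' (iter t (@ordS _) j0).
  elim=> [|t IH] /=.
    by rewrite (fib_min j0 hx fx) (fib_min j0 hx' fx') g0 !min0n.
  rewrite (fib_min _ hx fx) (fib_min _ hx' fx') /LL ordSK IH //.
have hU' : forall j, Un y x j = Un y x' j.
  by move=> j; have [t _ <-] := reach j0 j; apply: hU.
apply/ffunP => j.
have e1 := fib_star j hx fx; have e2 := fib_star j hx' fx'.
rewrite /LL hU' -/(LL x' j) -e2 in e1.
have r1 := Un_rec hy j hx; have r2 := Un_rec hy j hx'.
rewrite !hU' in r1.
move: e1 r1 r2; case: (x j) => [m|]; case: (x' j) => [m'|] //= _ r1 r2.
congr Some; apply: ord_inj; lia.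
Qed.

Lemma fib_none (g : {ffun 'I_k.+1 -> 'I_B.+1}) (x : state n k.+1) : (forall j, 0 < (g j : nat))%N -> inS x -> fib x g -> False.
Proof.
move=> gpos hx fx.
have [j1 hj1] := Un_zero y x.
have step : forall j, Un y x j = 0%N -> Un y x (ord_pred j) = 0%N /\ x j = None.
  move=> j h0; have m := fib_min j hx fx; have st := fib_star j hx fx.
  have := gpos j; have := cc_pos j; rewrite /LL in m st *.
  move=> hc hg; split; first lia.
  apply/eqP; rewrite st; lia.
have all0 : forall t, Un y x (iter t (@ord_pred _) j1) = 0%N.
  by elim=> [|t IH] //=; have [-> _] := step _ IH.
have allN : forall j, x j = None.
  by move=> j; have [t <-] := reach_pred j1 j; have [_ ->] := step _ (all0 t).
case/and3P: hx => _ _; rewrite /bnum.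
rewrite (eq_card (B := 'I_k.+1)) ?card_ord ?subn1 ?ltnn //.
by move=> i; rewrite !inE allN eqxx.
Qed.

End Fib.
Section Exist.
Variables (n k : nat) (y : state n k.+1) (B : nat).
Hypothesis hy : inS y.

Lemma Un_char (x : state n k.+1) (u : 'I_k.+1 -> nat) : inS x ->
  (forall j, u j + eabs (x j) = u (ord_pred j) + cc y j)%N ->
  (exists j, u j = 0%N) -> forall j, Un y x j = u j.
Proof.
move=> hx hu [j2 hj2] j.
have [j1 hj1] := Un_zero y x.
have h : forall j j', (Un y x j + u j' = Un y x j' + u j)%N.
  move=> i i'; have [t _ <-] := reach i i'.
  elim: t => [|t IH] /=; first lia.
  have := Un_rec hy (ordS (iter t (@ordS _) i)) hx.
  have := hu (ordS (iter t (@ordS _) i)); rewrite ordSK; lia.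
have := h j j1; have := h j2 j; lia.
Qed.

Variable g : {ffun 'I_k.+1 -> 'I_B.+1}.

Definition Fstep (w : 'I_k.+1 -> nat) : 'I_k.+1 -> nat :=
  fun j => minn (g j) (w (ord_pred j) + cc y j - 1).

Lemma indep j0 : (g j0 : nat) = 0%N -> forall t w w' i, (i < t)%N ->
  iter t Fstep w (iter i (@ordS _) j0) = iter t Fstep w' (iter i (@ordS _) j0).
Proof.
move=> g0; elim=> [|t IH] w w' i //= hi.
case: i hi => [|i] hi /=; first by rewrite /Fstep g0 !min0n.
by rewrite /Fstep ordSK (IH w w' i).
Qed.

Definition ustar := iter k.+1 Fstep (fun _ => 0%N).

Lemma ustar_fix j0 : (g j0 : nat) = 0%N -> forall j, ustar j = minn (g j) (ustar (ord_pred j) + cc y j - 1).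
Proof.
move=> g0 j; rewrite -/(Fstep ustar j).
change (ustar j = iter k.+2 Fstep (fun _ => 0%N) j).
rewrite iterSr /ustar.
have [t ht <-] := reach j0 j; exact: indep.
Qed.

Definition xstar : state n k.+1 :=
  [ffun j => if (ustar (ord_pred j) + cc y j - 1 < g j)%N then None
             else Some (inord (ustar (ord_pred j) + cc y j - ustar j))].

Lemma xstar_ok j0 : (g j0 : nat) = 0%N -> inS xstar && fib y xstar g.
Proof.
move=> g0.
have hfix := ustar_fix g0.
have hcp := cc_pos hy.
set u := ustar in hfix *.
pose v j := (u (ord_pred j) + cc y j - u j)%N.
have hv1 : forall j, (1 <= v j)%N by move=> j; have := hfix j; have := hcp j; rewrite /v; lia.
have hv2 : forall j, (v j + u j = u (ord_pred j) + cc y j)%N.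
  by move=> j; have := hfix j; have := hcp j; rewrite /v; lia.
have hsum : (\sum_j v j = n)%N.
  have e1 : (\sum_j (v j + u j) = \sum_j v j + \sum_j u j)%N by rewrite big_split.
  have e2 : (\sum_j (v j + u j) = \sum_j u (ord_pred j) + \sum_j cc y j)%N.
    by rewrite -big_split; apply: eq_bigr => j _; rewrite hv2.
  have e3 : (\sum_j u j = \sum_j u (ord_pred j))%N by rewrite (reindex_inj (@ord_pred_inj _)).
  have e4 : (\sum_j cc y j = n)%N by exact: inS_sum hy.
  lia.
have hvk : forall j, (v j + k <= n)%N.
  move=> j; rewrite -hsum (bigD1 j) //= leq_add2l.
  have : (\sum_(i | i != j) 1 <= \sum_(i | i != j) v i)%N by apply: leq_sum => i _; exact: hv1.
  by rewrite sum1_card cardC1 card_ord.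
have heabs : forall j, eabs (xstar j) = v j.
  move=> j; rewrite /xstar ffunE -/u; case: ifP => h /=.
    have := hfix j; have := hcp j; rewrite /v; lia.
  rewrite inordK //; have := hvk j; rewrite /v; lia.
have hUn : forall j, Un y xstar j = u j.
  have hx : inS xstar.
    apply/and3P; split.
    - apply/forallP => j; have := heabs j; have := hv1 j; have := hvk j.
      by case: (xstar j) => [m|] //= h1 h2 h3; apply/andP; split; lia.
    - by apply/eqP; transitivity (\sum_j v j)%N; [apply: eq_bigr => j _; exact: heabs | exact: hsum].
    - rewrite /bnum subn1 /=; apply: (@leq_trans #|predC1 j0|); last by rewrite cardC1 card_ord.
      apply: subset_leq_card; apply/subsetP => i; rewrite !inE.
      apply: contraTneq => ->; rewrite /xstar ffunE -/u g0 ltn0 //.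
  apply: Un_char => //; last by exists j0; rewrite hfix g0 min0n.
  by move=> j; rewrite heabs addnC hv2.
apply/andP; split.
  apply/and3P; split.
  - apply/forallP => j; have := heabs j; have := hv1 j; have := hvk j.
    by case: (xstar j) => [m|] //= h1 h2 h3; apply/andP; split; lia.
  - by apply/eqP; transitivity (\sum_j v j)%N; [apply: eq_bigr => j _; exact: heabs | exact: hsum].
  - rewrite /bnum subn1 /=; apply: (@leq_trans #|predC1 j0|); last by rewrite cardC1 card_ord.
    apply: subset_leq_card; apply/subsetP => i; rewrite !inE.
    apply: contraTneq => ->; rewrite /xstar ffunE -/u g0 ltn0 //.
apply/forallP => j; rewrite /LL !hUn /xstar ffunE -/u.
case: ifP => h //=.
apply/eqP; have := hfix j; move/negbT: h; rewrite -leqNgt; lia.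
Qed.

End Exist.

Section Key.
Variables (R : realFieldType) (s : R) (n k : nat) (y : state n k.+1).
Hypotheses (hy : inS y) (hs0 : 0 < s) (hs1 : s < 1) (hn : (0 < n)%N).

Local Notation B := (3 * n)%N.

Lemma count_fib (g : {ffun 'I_k.+1 -> 'I_B.+1}) (F : R) :
  \sum_(x | inS x && fib y x g) F = if [exists j, (g j : nat) == 0%N] then F else 0.
Proof.
case: ifP => [/existsP [j0 /eqP g0] | /negbT hne].
  rewrite (big_pred1 (xstar y g)) // => x; rewrite /=.
  apply/idP/eqP => [/andP [hx fx] | ->]; last exact: (@xstar_ok n k y (3*n)%N hy g j0 g0).
  have /andP [h1 h2] := (@xstar_ok n k y (3*n)%N hy g j0 g0); exact: (@fib_unique n k y (3*n)%N hy g j0 _ _ g0 hx fx h1 h2).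
rewrite big_pred0 // => x; apply/negbTE/negP => /andP [hx fx].
apply: (fib_none hy _ hx fx) => j; move: hne; rewrite negb_exists => /forallP /(_ j).
by rewrite lt0n.
Qed.

Lemma cc_le j : (cc y j <= n)%N.
Proof.
rewrite -{2}(inS_sum hy) (bigD1 j) //=; exact: leq_addr.
Qed.

Lemma fiber (x : state n k.+1) : inS x ->
  \sum_(g : {ffun 'I_k.+1 -> 'I_B.+1} | fib y x g) \prod_j rho s (g j) =
  s ^+ k.+1 * ((1 - s) / s) ^+ bnum x * (1 - s) ^+ (\sum_j Un y x j).
Proof.
move=> hx.
pose Q := fun j : 'I_k.+1 => [pred t : 'I_B.+1 |
   if x j is None then (LL y x j < t)%N else (t == Un y x j :> nat)].
rewrite (eq_bigl (fun g => g \in family Q)); last first.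
  by move=> g; apply/forallP/familyP => h j; exact: (h j).
rewrite -(bigA_distr_big_dep _ (fun _ t => rho s t)) /=.
have eR : s ^+ k.+1 * ((1 - s) / s) ^+ bnum x * (1 - s) ^+ (\sum_j Un y x j) =
   \prod_j (s * (if x j == None then (1 - s) / s else 1) * (1 - s) ^+ Un y x j).
  rewrite !big_split /= prodr_const card_ord -big_mkcond /= prodr_const prodrXr.
  done.
rewrite eR; apply: eq_bigr => j _.
have hb := Un_bound hy j hx; have hbp := Un_bound hy (ord_pred j) hx.
have hc := cc_le j; have hcp := cc_pos hy j.
have hr := Un_rec hy j hx.
rewrite /Q /=; move: hr; case: (x j) => [m|] /= hr.
  have hlt : (Un y x j < B.+1)%N by lia.
  rewrite (big_pred1 (Ordinal hlt)) /=; last by move=> t; rewrite /= -val_eqE.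
  rewrite /rho /rhon /=; have -> : (Un y x j < B)%N by lia.
  by rewrite mulr1.
rewrite rho_tail; last by rewrite /LL; lia.
have -> : Un y x j = LL y x j by rewrite /LL; lia.
rewrite exprS; field; exact: lt0r_neq0.
Qed.

Lemma key : s ^+ k.+1 * \sum_(x | inS x) ((1 - s) / s) ^+ bnum x * (1 - s) ^+ (\sum_j Un y x j)
  = 1 - (1 - s) ^+ k.+1.
Proof.
rewrite mulr_sumr.
transitivity (\sum_(x | inS x) \sum_(g : {ffun 'I_k.+1 -> 'I_B.+1} | fib y x g) \prod_j rho s (g j)).
  by apply: eq_bigr => x hx; rewrite fiber // !mulrA.
rewrite (eq_bigr (fun x => \sum_(g : {ffun 'I_k.+1 -> 'I_B.+1}) (if fib y x g then \prod_j rho s (g j) else 0))); last by move=> x _; rewrite big_mkcond.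
rewrite exchange_big /=.
transitivity (\sum_(g : {ffun 'I_k.+1 -> 'I_B.+1}) (if [exists j, (g j : nat) == 0%N] then \prod_j rho s (g j) else 0)).
  by apply: eq_bigr => g _; rewrite -big_mkcondr; exact: count_fib.
transitivity (\sum_(g : {ffun 'I_k.+1 -> 'I_B.+1}) \prod_j rho s (g j) -
   \sum_(g : {ffun 'I_k.+1 -> 'I_B.+1}) (if [forall j, (0 < g j)%N] then \prod_j rho s (g j) else 0)).
  rewrite -sumrB; apply: eq_bigr => g _; case: ifP => [/existsP [j /eqP h]|/negbT h].
    rewrite ifF ?subr0 //; apply/negbTE; rewrite negb_forall; apply/existsP; exists j; by rewrite h.
  rewrite ifT ?subrr //; apply/forallP => j; move: h; rewrite negb_exists => /forallP /(_ j).
  by rewrite lt0n.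
congr (_ - _).
  rewrite -(bigA_distr_bigA (fun (_ : 'I_k.+1) (t : 'I_B.+1) => rho s t)) /=.
  rewrite (eq_bigr (fun _ => 1)); first by rewrite big1_eq.
  by move=> i _; rewrite rho_sum.
rewrite -big_mkcond /=.
pose Q := fun _ : 'I_k.+1 => [pred t : 'I_B.+1 | (0 < t)%N].
rewrite (eq_bigl (fun g => g \in family Q)); last first.
  by move=> g; apply/forallP/familyP => h j; exact: (h j).
rewrite -(bigA_distr_big_dep _ (fun _ t => rho s t)) /=.
rewrite (eq_bigr (fun _ => 1 - s)); first by rewrite prodr_const card_ord.
move=> i _; rewrite /Q /= rho_sum1 //; lia.
Qed.

End Key.
Lemma phi_eq n k (y x : state n k.+1) : phi (delta x y) = (\sum_j Un y x j)%N%:Z.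
Proof.
rewrite /phi -sumz; apply: eq_bigr => j _; by rewrite UnE.
Qed.

Unset Implicit Arguments.
Set Strict Implicit.

Theorem mainTheorem1 (R : realFieldType) (n k : nat) (s : R) :
  (1 <= k <= n)%N -> 0 < s < 1 ->
  (forall y : state n k, inS y ->
     nu s y = \sum_(x : state n k | inS x) nu s x * Ptrans s x y) /\
  (forall mu : state n k -> R,
     (forall x, inS x -> 0 <= mu x) ->
     \sum_(x : state n k | inS x) mu x = 1 ->
     (forall y, inS y -> mu y = \sum_(x : state n k | inS x) mu x * Ptrans s x y) ->
     forall x, inS x -> mu x = nu s x).
Proof.
case: k => [|k] // /andP [_ hkn] /andP [hs0 hs1].
have hn : (0 < n)%N by lia.
set q := 1 - s.
have hq0 : 0 < q by rewrite /q subr_gt0.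
have hq1 : q < 1 by rewrite /q ltrBlDr ltrDl.
have hr0 : 0 < q / s by rewrite divr_gt0.
have hqK : q ^+ k.+1 < 1 by rewrite exprn_ilt1 // ltW.
have hC0 : 0 < s ^+ k.+1 / (1 - q ^+ k.+1) by rewrite divr_gt0 ?exprn_gt0 // subr_gt0.
have Ppos : forall x y : state n k.+1, 0 < Ptrans s x y.
  move=> x y; rewrite /Ptrans -/q mulr_gt0 ?exprz_gt0 // mulr_gt0 // exprn_gt0 //.
have om_pos : forall x : state n k.+1, 0 < omega s x by move=> x; rewrite /omega exprn_gt0.
have Z_pos : forall x : state n k.+1, inS x -> 0 < \sum_(z : state n k.+1 | inS z) omega s z.
  move=> x hx; rewrite (bigD1 x) //= ltr_pwDl ?om_pos // sumr_ge0 // => i _; exact: ltW.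
have nu_pos : forall x : state n k.+1, inS x -> 0 < nu s x.
  by move=> x hx; rewrite /nu divr_gt0 ?om_pos ?(Z_pos x hx).
have stat : forall y : state n k.+1, inS y ->
    nu s y = \sum_(x : state n k.+1 | inS x) nu s x * Ptrans s x y.
  move=> y hy.
  have hk := key hy hs0 hs1 hn.
  set S := \sum_(x | inS x) _ in hk.
  have e : \sum_(x : state n k.+1 | inS x) nu s x * Ptrans s x y =
      nu s y * (s ^+ k.+1 / (1 - q ^+ k.+1) * S).
    rewrite /S !mulr_sumr; apply: eq_bigr => x hx.
    rewrite /nu /Ptrans /omega phi_eq -exprnP -/q; ring.
  have hC : s ^+ k.+1 / (1 - q ^+ k.+1) * S = 1.
    rewrite mulrAC /q hk mulfV //; apply: lt0r_neq0; rewrite subr_gt0; exact: hqK.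
  by rewrite e hC mulr1.
split => // mu _ hmu1 hmu x0 hx0.
have [z hz hmin] := arg_minP (fun i => mu i / nu s i) hx0.
set c := mu z / nu s z in hmin.
have wge0 : forall i, inS i -> 0 <= mu i - c * nu s i.
  by move=> i hi; have := hmin i hi; rewrite subr_ge0 ler_pdivlMr ?nu_pos.
have wz : mu z - c * nu s z = 0.
  by rewrite /c divfK ?subrr // lt0r_neq0 ?nu_pos.
have wstat : mu z - c * nu s z =
    \sum_(x : state n k.+1 | inS x) (mu x - c * nu s x) * Ptrans s x z.
  rewrite (hmu z hz) (stat z hz) mulr_sumr -sumrB; apply: eq_bigr => x _; ring.
have w0 : forall i, inS i -> mu i = c * nu s i.
  move=> i hi; apply/eqP; rewrite -subr_eq0; apply/eqP.
  have := psumr_eq0P (P := fun x => inS x) (F := fun x => (mu x - c * nu s x) * Ptrans s x z).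
  move=> /(_ _) h; have := h (fun x hx => mulr_ge0 (wge0 x hx) (ltW (Ppos x z))).
  rewrite -wstat wz => /(_ erefl i hi) /eqP; rewrite mulf_eq0 => /orP [/eqP //|].
  by rewrite (negbTE (lt0r_neq0 (Ppos i z))).
have nusum : \sum_(x : state n k.+1 | inS x) nu s x = 1.
  by rewrite /nu -mulr_suml mulfV // lt0r_neq0 ?(Z_pos _ hx0).
have c1 : c = 1.
  rewrite -hmu1 (eq_bigr (fun x => c * nu s x)) -?mulr_sumr ?nusum ?mulr1 //.
rewrite w0 // c1 mul1r //.
Qed.
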